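(* Given a moment graph $\mathcal{G}$ on a lattice $\Lambda$ and a $\mathcal{G}$-compatible equivalence relation `$\sim$' on its vertex set, the quotient $\mathcal{G}_\sim$ is a moment graph on $\Lambda$.
   Context: A moment graph on a lattice $\Lambda$ is $\mathcal{G}=\big((V,\le), l\colon E\to \Lambda\setminus\{0\}\big)$ where $(V,\le)$ is a poset, $E\subset V\times V$ is a set of directed edges $v\to w$ labelled by $l(v\to w)\in\Lambda\setminus\{0\}$, and for every edge $v\to w$ we have $v\le w$, $v\ne w$. An equivalence relation `$\sim$' on $V$ is $\mathcal{G}$-compatible if (EQV1) $v\sim w$ implies $v\sim u$ for all $v\le u\le w$; (EQV2) if $v_1\to w_1\in E$, $v_1\not\sim w_1$, then for any $v_2\sim v_1$ there is a unique $w_2\sim w_1$ with $v_2\to w_2\in E$, and moreover $l(v_1\to w_1)=l(v_2\to w_2)$. The quotient $\mathcal{G}_\sim=\big((V_\sim,\le_\sim),l_\sim\colon E_\sim\to\Lambda\setminus\{0\}\big)$ has vertex set $V_\sim$ the set of equivalence classes $[v]$; edges $E_\sim=\{[v]\to[w]\mid v\not\sim w,\ \exists v'\sim v,\ w'\sim w \text{ with } v'\to w'\in E\}$; $\le_\sim$ the transitive closure of the relations $[v]\le_\sim[w]$ for $[v]\to[w]\in E_\sim$; and $l_\sim([v]\to[w]):=l(v'\to w')$ for $v'\sim v$, $w'\sim w$, $v'\to w'\in E$. *)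

(* Defs.v *)
From mathcomp Require Import all_boot all_order all_algebra.
From Stdlib Require Import Relations ClassicalEpsilon.

Set Implicit Arguments.
Unset Strict Implicit.
Unset Printing Implicit Defensive.

Local Open Scope ring_scope.

Definition lattice (n : nat) := 'rV[int]_n.

(* A moment graph on a lattice Lambda: vertex type V with a relation le,
   an edge set E (v -> w iff E v w) and a labelling l, meaningful on edges. *)
Definition is_moment_graph (Lam : zmodType) (V : Type)
  (le : V -> V -> Prop) (E : V -> V -> Prop) (l : V -> V -> Lam) : Prop :=
  (forall v, le v v) /\
  (forall v w, le v w -> le w v -> v = w) /\
  (forall u v w, le u v -> le v w -> le u w) /\
  (forall v w, E v w -> le v w /\ v <> w /\ l v w <> 0).

Definition EQV1 (V : Type) (le : V -> V -> Prop) (eqv : V -> V -> Prop) : Prop :=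
  forall v w u, eqv v w -> le v u -> le u w -> eqv v u.

Definition EQV2 (Lam : zmodType) (V : Type) (E : V -> V -> Prop)
  (l : V -> V -> Lam) (eqv : V -> V -> Prop) : Prop :=
  forall v1 w1, E v1 w1 -> ~ eqv v1 w1 ->
  forall v2, eqv v2 v1 ->
    (exists w2, eqv w2 w1 /\ E v2 w2 /\ l v1 w1 = l v2 w2) /\
    (forall w2 w2', eqv w2 w1 -> E v2 w2 -> eqv w2' w1 -> E v2 w2' -> w2 = w2').

Definition compatible (Lam : zmodType) (V : Type) (le E : V -> V -> Prop)
  (l : V -> V -> Lam) (eqv : V -> V -> Prop) : Prop :=
  EQV1 le eqv /\ EQV2 E l eqv.

Definition eqclass (V : Type) (eqv : V -> V -> Prop) (v : V) : V -> Prop :=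
  fun u => eqv v u.

Definition qvert (V : Type) (eqv : V -> V -> Prop) : Type :=
  { C : V -> Prop | exists v, C = eqclass eqv v }.

Definition cls (V : Type) (eqv : V -> V -> Prop) (v : V) : qvert eqv :=
  exist _ (eqclass eqv v) (ex_intro _ v erefl).

Definition qedge (V : Type) (eqv : V -> V -> Prop) (E : V -> V -> Prop)
  (C D : qvert eqv) : Prop :=
  exists v w, C = cls eqv v /\ D = cls eqv w /\ ~ eqv v w /\
    exists v' w', eqv v' v /\ eqv w' w /\ E v' w'.

Definition qle (V : Type) (eqv : V -> V -> Prop) (E : V -> V -> Prop) :
  qvert eqv -> qvert eqv -> Prop :=
  clos_refl_trans (qvert eqv) (qedge E).

Definition qlabel (Lam : zmodType) (V : Type) (eqv : V -> V -> Prop)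
  (E : V -> V -> Prop) (l : V -> V -> Lam) (C D : qvert eqv) : Lam :=
  epsilon (inhabits (0 : Lam)) (fun a =>
    exists v w v' w', C = cls eqv v /\ D = cls eqv w /\
      eqv v' v /\ eqv w' w /\ E v' w' /\ a = l v' w').

Arguments qvert {V} eqv.
Arguments cls {V} eqv v.
Arguments qedge {V} eqv E C D.
Arguments qle {V} eqv E _ _.
Arguments qlabel {Lam V} eqv E l C D.

(* Main.v *)
Require Import Defs.
From mathcomp Require Import all_boot all_order all_algebra.
From Stdlib Require Import Relations.
From Stdlib Require Import ClassicalEpsilon ProofIrrelevance FunctionalExtensionality PropExtensionality.

Lemma cls_eq (V : Type) (eqv : V -> V -> Prop) (v w : V) :
  equivalence V eqv -> eqv v w -> cls eqv v = cls eqv w.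
Proof.
move=> [Hr Ht Hs] Hvw.
have H : eqclass eqv v = eqclass eqv w.
  apply: functional_extensionality => u; apply: propositional_extensionality.
  rewrite /eqclass; split=> H; [apply: Ht _ _ _ (Hs _ _ Hvw) H | apply: Ht Hvw H].
rewrite /cls; move: (ex_intro _ v _) (ex_intro _ w _); rewrite H => p q.
by rewrite (proof_irrelevance _ p q).
Qed.

Lemma cls_inv (V : Type) (eqv : V -> V -> Prop) (v w : V) :
  equivalence V eqv -> cls eqv v = cls eqv w -> eqv v w.
Proof.
move=> [Hr Ht Hs] H.
have : proj1_sig (cls eqv v) w by rewrite H /= /eqclass; apply: Hr.
by [].
Qed.

Lemma lift (n : nat) (V : Type) (le E : V -> V -> Prop)
  (l : V -> V -> lattice n) (eqv : V -> V -> Prop) :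
  is_moment_graph le E l -> equivalence V eqv -> compatible le E l eqv ->
  forall C D, qle eqv E C D -> forall a, proj1_sig C a ->
    exists b, proj1_sig D b /\ le a b.
Proof.
move=> [Lr [La [Lt LE]]] [Hr Ht Hs] [E1 E2].
move=> C D; elim=> {C D}.
- move=> C D [v [w [-> [-> [Nvw [v' [w' [Hv' [Hw' Ev]]]]]]]]] a /= Ha.
  have Nv'w' : ~ eqv v' w'.
    move=> K; apply: Nvw; exact: Ht _ _ _ (Hs _ _ Hv') (Ht _ _ _ K Hw').
  have Ha0 : eqv v a by exact: Ha.
  have Hav' : eqv a v' by apply: Ht _ _ _ (Hs _ _ Ha0) (Hs _ _ Hv').
  have [[w2 [Hw2 [Ea _]]] _] := E2 _ _ Ev Nv'w' a Hav'.
  exists w2; split; last by case: (LE _ _ Ea).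
  rewrite /= /eqclass; apply: Ht _ _ _ (Hs _ _ Hw') (Hs _ _ Hw2).
- move=> C a Ha; exists a; split=> //; exact: Lr.
- move=> C D F _ IH1 _ IH2 a Ha.
  have [b [Hb Hab]] := IH1 a Ha.
  have [c [Hc Hbc]] := IH2 b Hb.
  exists c; split=> //; exact: Lt Hab Hbc.
Qed.

Theorem mainTheorem1 (n : nat) (V : Type) (le E : V -> V -> Prop)
  (l : V -> V -> lattice n) (eqv : V -> V -> Prop) :
  is_moment_graph le E l ->
  equivalence V eqv ->
  compatible le E l eqv ->
  is_moment_graph (qle eqv E) (qedge eqv E) (qlabel eqv E l) /\
  (* the label l_~ is well defined: it equals l(v' -> w') for every
     representative edge v' -> w' between the two classes *)
  (forall v w v' w', ~ eqv v w -> eqv v' v -> eqv w' w -> E v' w' ->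
     qlabel eqv E l (cls eqv v) (cls eqv w) = l v' w').
Proof.
move=> HG HE HC.
have HG' := HG; have HE' := HE; have HC' := HC.
move: HG => [Lr [La [Lt LE]]]; move: HE => [Hr Ht Hs]; move: HC => [E1 E2].
have WD : forall v w v' w', ~ eqv v w -> eqv v' v -> eqv w' w -> E v' w' ->
     qlabel eqv E l (cls eqv v) (cls eqv w) = l v' w'.
  move=> v w v' w' Nvw Hv' Hw' Ev.
  rewrite /qlabel.
  set P := (fun a => _).
  have ex : exists a, P a.
    by exists (l v' w'), v, w, v', w'.
  have := epsilon_spec (inhabits (0 : lattice n)%R) P ex.
  move: (epsilon _ _) => a [v0 [w0 [v'' [w'' [Hc [Hd [Hv'' [Hw'' [Ev' ->]]]]]]]]].
  have Hv0 := @cls_inv _ _ _ _ HE' (esym Hc); have Hw0 := @cls_inv _ _ _ _ HE' (esym Hd).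
  have Nv'w' : ~ eqv v' w'.
    move=> K; apply: Nvw; exact: Ht _ _ _ (Hs _ _ Hv') (Ht _ _ _ K Hw').
  have Hv2 : eqv v'' v'.
    apply: (Ht _ _ _ Hv''); exact: (Ht _ _ _ Hv0 (Hs _ _ Hv')).
  have Hw2 : eqv w'' w'.
    apply: (Ht _ _ _ Hw''); exact: (Ht _ _ _ Hw0 (Hs _ _ Hw')).
  have [[w3 [Hw3 [Ea Hl]]] Hu] := E2 _ _ Ev Nv'w' v'' Hv2.
  by rewrite Hl (Hu _ _ Hw3 Ea Hw2 Ev').
split=> //.
split; first by move=> C; apply: rt_refl.
split.
  move=> [C HC] [D HD] H1 H2.
  have [a HCa] := constructive_indefinite_description _ HC.
  have [b HDb] := constructive_indefinite_description _ HD.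
  have Ha0 : proj1_sig (exist (fun C0 => exists v, C0 = eqclass eqv v) C HC) a.
    by rewrite /= HCa /eqclass; exact: Hr.
  have [b' [Hb' Hab']] := @lift _ _ _ _ _ _ HG' HE' HC' _ _ H1 a Ha0.
  have [a' [Ha' Hba']] := @lift _ _ _ _ _ _ HG' HE' HC' _ _ H2 b' Hb'.
  have Hb'' : eqv b b' by move: Hb'; rewrite /= HDb.
  have Ha'' : eqv a a' by move: Ha'; rewrite /= HCa.
  move: Hb'' Ha'' => {Hb' Ha'} Hb' Ha'.
  have Hab : eqv a b' by exact: (E1 a a' b' Ha' Hab' Hba').
  have Hab2 : eqv a b by exact: (Ht _ _ _ Hab (Hs _ _ Hb')).
  have := f_equal (@proj1_sig _ _) (@cls_eq _ _ _ _ HE' Hab2) => /= Heq.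
  have CD : C = D by rewrite HCa HDb.
  move: HC HD H1 H2 Ha0; rewrite CD => p q _ _ _.
  by rewrite (proof_irrelevance _ p q).
split; first by move=> u v w; apply: rt_trans.
move=> C D Hq; split; first exact: rt_step.
move: Hq => [v [w [-> [-> [Nvw [v' [w' [Hv' [Hw' Ev]]]]]]]]].
split; first by move=> /(@cls_inv _ _ _ _ HE').
rewrite (WD _ _ _ _ Nvw Hv' Hw' Ev).
by case: (LE _ _ Ev) => _ [].
Qed.
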